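(* There are infinitely many positive integers $N$ such that there is exactly one pair $(A,B)$ of antipalindromic numbers with $N=A/B$.
   Context: A positive integer $n$ is antipalindromic if its binary representation $w=w_1\cdots w_L$ (most significant digit first, no leading zeros) has even length $L$ and satisfies $w_i+w_{L+1-i}=1$ for all $i$. *)

(* Defs.v *)
From mathcomp Require Import all_boot.
Set Implicit Arguments. Unset Strict Implicit. Unset Printing Implicit Defensive.

Definition bin_digits (n : nat) : seq nat :=
  if n == 0 then [::]
  else rev [seq nat_of_bool (odd (n %/ 2 ^ j)) | j <- iota 0 (trunc_log 2 n).+1].

(* w = w_1 ... w_L (w_i = nth 0 w (i-1)); antipalindromic: L even and
   w_i + w_{L+1-i} = 1 for all 1 <= i <= L. *)
Definition antipalindromic (n : nat) : bool :=
  let w := bin_digits n in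
  let L := size w in
  [&& 0 < n, ~~ odd L &
      all (fun i => nth 0 w i + nth 0 w (L - 1 - i) == 1) (iota 0 L)].

Example antipal_test : antipalindromic 2 && antipalindromic 12 && ~~ antipalindromic 3
  && antipalindromic 10 && ~~ antipalindromic 9.
Proof. by []. Qed.

(* Main.v *)
Require Import Defs.
From mathcomp Require Import all_boot zify.
Set Implicit Arguments. Unset Strict Implicit.

Definition Lg n := (trunc_log 2 n).+1.

Lemma size_bd n : 0 < n -> size (bin_digits n) = Lg n.
Proof.
by rewrite /bin_digits; case: eqP => [->//|_ _]; rewrite size_rev size_map size_iota.
Qed.

Lemma nth_bd n i : 0 < n -> i < Lg n ->
  nth 0 (bin_digits n) i = odd (n %/ 2 ^ (Lg n - 1 - i)).
Proof.
move=> n0 iL.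
rewrite /bin_digits; case: eqP => [n00|_]; first by rewrite n00 in n0.
rewrite nth_rev; last by rewrite size_map size_iota.
rewrite size_map size_iota (nth_map 0); last by rewrite size_iota /Lg in iL *; lia.
rewrite nth_iota; last by rewrite /Lg in iL *; lia.
by rewrite /Lg in iL *; congr (nat_of_bool (odd (n %/ 2 ^ _))); lia.
Qed.

Lemma Lg_bounds n : 0 < n -> 2 ^ (Lg n - 1) <= n < 2 ^ (Lg n).
Proof. move=> n0; rewrite /Lg subn1 /=; exact: trunc_log_bounds. Qed.

Lemma Lg_eq n m : 2 ^ m <= n < 2 ^ m.+1 -> Lg n = m.+1.
Proof. by move=> H; rewrite /Lg (trunc_log_eq _ H). Qed.

Lemma antiP n : antipalindromic n ->
  [/\ 0 < n, ~~ odd (Lg n) &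
   forall i, i < Lg n -> odd (n %/ 2 ^ i) = ~~ odd (n %/ 2 ^ (Lg n - 1 - i))].
Proof.
rewrite /antipalindromic; case/and3P=> n0; rewrite size_bd // => ev /allP H.
split=> // i iL.
have := H i; rewrite mem_iota /= iL => /(_ isT).
rewrite nth_bd // nth_bd //; last by lia.
have -> : Lg n - 1 - (Lg n - 1 - i) = i by lia.
by case: (odd (n %/ 2 ^ i)); case: (odd (n %/ 2 ^ (Lg n - 1 - i))).
Qed.

Lemma antiI n : 0 < n -> ~~ odd (Lg n) ->
  (forall i, i < Lg n -> odd (n %/ 2 ^ i) = ~~ odd (n %/ 2 ^ (Lg n - 1 - i))) ->
  antipalindromic n.
Proof.
move=> n0 ev H; rewrite /antipalindromic size_bd //; apply/and3P; split=> //.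
apply/allP=> i; rewrite mem_iota /= => iL.
rewrite nth_bd // nth_bd //; last by lia.
have -> : Lg n - 1 - (Lg n - 1 - i) = i by lia.
rewrite (H i); last by lia.
by case: (odd _).
Qed.

Lemma top3 n t : antipalindromic n -> 6 <= Lg n ->
  t = 4 + 2 * ~~ odd (n %/ 2) + ~~ odd (n %/ 4) ->
  t * 2 ^ (Lg n - 3) <= n < t.+1 * 2 ^ (Lg n - 3).
Proof.
move=> /antiP [n0 ev H] L6 ->.
set p := Lg n - 3.
have /andP[lo hi] := @Lg_bounds n n0.
have eL : Lg n = p + 3 by rewrite /p; lia.
set y := n %/ 2 ^ p.
have y8 : y < 8.
  by rewrite ltn_divLR ?expn_gt0 // -(expnD 2 3 p) addnC -eL.
have y4 : y %/ 4 = n %/ 2 ^ (Lg n - 1).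
  by rewrite /y -divnMA -(expnD 2 p 2); congr (n %/ 2 ^ _); lia.
have y2 : y %/ 2 = n %/ 2 ^ (Lg n - 2).
  by rewrite /y -divnMA -(expnD 2 p 1); congr (n %/ 2 ^ _); lia.
have ge4 : 1 <= y %/ 4 by rewrite y4 leq_divRL ?expn_gt0 // mul1n.
have b1 : ~~ odd (n %/ 2) = odd (y %/ 2).
  rewrite y2 (H 1); last by lia.
  by rewrite negbK; congr (odd (n %/ 2 ^ _)); lia.
have b2 : ~~ odd (n %/ 4) = odd y.
  rewrite (H 2); last by lia.
  by rewrite negbK; congr (odd (n %/ 2 ^ _)); rewrite /p; lia.
have ty : 4 + 2 * ~~ odd (n %/ 2) + ~~ odd (n %/ 4) = y.
  rewrite b1 b2.
  move: y8 ge4; clear; move: y => y.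
  by do 8 (case: y => [|y] //).
rewrite ty; apply/andP; split; first exact: leq_trunc_div.
by apply: ltn_ceil; rewrite expn_gt0.
Qed.

Fixpoint nk k := if k is k'.+1 then 4 * nk k' + 1 else 0.

Lemma nkE k : 3 * nk k + 1 = 4 ^ k.
Proof. elim: k => [//|k IH] /=; rewrite expnS -IH; lia. Qed.

Lemma bits_a k i : i < k.*2 -> odd ((nk k).*2 %/ 2 ^ i) = odd i.
Proof.
elim: k i => [|k IH] i //=.
have -> : (4 * nk k + 1).*2 = 2 + (nk k).*2 * 4 by lia.
case: i => [|[|i]] Hi.
- by rewrite expn0 divn1 /= negbK add0n oddM andbF.
- rewrite expn1 (_ : 2 + (nk k).*2 * 4 = 0 + ((nk k).*2 * 2 + 1) * 2); last by lia.
  by rewrite divnDMl // add0n oddD oddM andbF.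
- rewrite (_ : i.+2 = 2 + i) // expnD divnMA divnDMl //.
  rewrite (_ : 2 %/ 4 = 0) // add0n IH //; rewrite doubleS in Hi; lia.
Qed.

Lemma odd_compl m i : i < m.*2 -> odd (m.*2 - 1 - i) = ~~ odd i.
Proof.
move=> H; have : odd ((m.*2 - 1 - i) + i) = true.
  have -> : m.*2 - 1 - i + i = (m.-1).*2.+1 by lia.
  by rewrite /= odd_double.
by rewrite oddD; case: (odd i); case: (odd _).
Qed.

Lemma anti_a k : 0 < k -> antipalindromic (nk k).*2.
Proof.
case: k => // j _.
have E := nkE j.+1.
have Y1 : 0 < 4 ^ j by rewrite expn_gt0.
have LL : Lg (nk j.+1).*2 = (j.+1).*2.
  apply: (@Lg_eq _ (j.*2.+1)).
  have e1 : 2 ^ (j.*2) = 4 ^ j by rewrite -mul2n expnM.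
  rewrite !expnS e1.
  rewrite expnS in E; apply/andP; split; lia.
apply: antiI; first by rewrite /=; lia.
  by rewrite LL odd_double.
move=> i; rewrite LL => Hi.
by rewrite bits_a // bits_a ?odd_compl //; lia.
Qed.

Lemma core1 t N X P E A B : 4 <= t -> 4 <= X -> 3 * N + 1 = 4 * X ->
  (E <= X \/ 4 * X <= E) -> 0 < P -> t * P <= B -> B < t.+1 * P ->
  t * (P * E) <= A -> A < t.+1 * (P * E) -> A = N * B -> False.
Proof.
move=> t4 X4 EN HE P0 b1 b2 a1 a2 AB.
have h1 : t * E < N * t.+1.
  rewrite -(ltn_pmul2r P0).
  apply: (leq_ltn_trans (_ : _ <= A)); first by rewrite mulnAC mulnA in a1 *; lia.
  have N0 : 0 < N by lia.
  by rewrite AB -mulnA ltn_pmul2l.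
have h2 : N * t < t.+1 * E.
  rewrite -(ltn_pmul2r P0).
  apply: (leq_ltn_trans (_ : _ <= A)).
    by rewrite AB -mulnA leq_mul2l b1 orbT.
  by rewrite -mulnA [E * P]mulnC.
case: HE => HE; nia.
Qed.

Lemma core0 t P Q A B : 1 <= t -> 2 * Q <= P -> t * P <= B -> A < t.+1 * Q ->
  B <= A -> False.
Proof. move=> *; nia. Qed.

Lemma core_small B t N X E : 4 <= X -> 3 * N + 1 = 4 * X -> (E <= X \/ 4 * X <= E) ->
  (B = 10 /\ t = 5 \/ B = 12 /\ t = 6) ->
  t * (2 * E) <= N * B -> N * B < t.+1 * (2 * E) -> False.
Proof. move=> X4 EN HE [[-> ->]|[-> ->]]; case: HE => HE; lia. Qed.

Lemma anti_even n : antipalindromic n -> ~~ odd n.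
Proof.
move=> /antiP [n0 ev H].
have /andP[lo hi] := @Lg_bounds n n0.
have q1 : n %/ 2 ^ (Lg n - 1) = 1.
  apply/eqP; rewrite eqn_leq; apply/andP; split.
    rewrite -ltnS ltn_divLR ?expn_gt0 // -expnS.
    by rewrite (_ : (Lg n - 1).+1 = Lg n) // /Lg; lia.
  by rewrite leq_divRL ?expn_gt0 // mul1n.
have := H 0; rewrite expn0 divn1 subn0 q1 => -> //.

Qed.

Lemma small_anti B : B < 16 -> antipalindromic B -> [\/ B = 2, B = 10 | B = 12].
Proof.
case: B => [|[|[|[|[|[|[|[|[|[|[|[|[|[|[|[|B]]]]]]]]]]]]]]]].
all: move=> h H; first [by [] | by apply: Or31 | by apply: Or32 | by apply: Or33].
Qed.

Lemma Lg6 n : 16 <= n -> ~~ odd (Lg n) -> 6 <= Lg n.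
Proof.
move=> n16 ev.
have /andP[_ hi] := @Lg_bounds n (leq_trans (isT : 0 < 16) n16).
case: (leqP 6 (Lg n)) => // h.
have : Lg n <= 4.
  move: ev h; case: (Lg n) => [|[|[|[|[|[|l]]]]]] //.
move=> h4; have := leq_trans hi (_ : 2 ^ Lg n <= 2 ^ 4).
by rewrite leq_exp2l // => /(_ h4); lia.
Qed.

Lemma lowbits X B A : ~~ odd B -> A = (4 * X + 1) * B ->
  odd (A %/ 2) = odd (B %/ 2) /\ odd (A %/ 4) = odd (B %/ 4).
Proof.
move=> ev ->.
have eB : B = (B./2).*2 by rewrite -{1}[B]odd_double_half (negbTE ev).
have e1 : (4 * X + 1) * B = B + (X * B./2 * 4) * 2 by rewrite {2}eB; lia.
have e2 : (4 * X + 1) * B = B + (X * B./2 * 2) * 4 by rewrite {2}eB; lia.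
split; [rewrite e1 | rewrite e2]; rewrite divnDMl // oddD oddM /= andbF addbF //.
Qed.

Lemma even_len n : ~~ odd (Lg n) -> Lg n = 2 * (Lg n)./2.
Proof. move=> ev; rewrite -{1}[Lg n]odd_double_half (negbTE ev) add0n; lia. Qed.

Lemma pow_cmp e k : 4 ^ e <= 4 ^ k.+1 \/ 4 * 4 ^ k.+1 <= 4 ^ e.
Proof.
case: (leqP e k.+1) => h; [left | right]; first by rewrite leq_exp2l.
by rewrite -expnS leq_exp2l.
Qed.

Lemma len_split L : 5 < L -> L = 2 * L./2 -> L - 3 = 1 + 2 * (L./2 - 2).
Proof. lia. Qed.

Lemma len_split2 LA LB : LB./2 <= LA./2 -> 5 < LA -> 5 < LB -> LA = 2 * LA./2 ->
  LB = 2 * LB./2 -> LA - 3 = (LB - 3) + 2 * (LA./2 - LB./2).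
Proof. lia. Qed.

Lemma pow4_ge4 d : 0 < d -> 4 <= 4 ^ d.
Proof. case: d => // d _; rewrite expnS; have := expn_gt0 4 d; lia. Qed.

Lemma N_pos N X : 4 <= X -> 3 * N + 1 = 4 * X -> 5 <= N.
Proof. lia. Qed.

Lemma small_case A B N X : antipalindromic A -> 4 <= X -> 3 * N + 1 = 4 * X ->
  A = N * B -> (B = 10 \/ B = 12) ->
  odd (A %/ 2) = odd (B %/ 2) -> odd (A %/ 4) = odd (B %/ 4) ->
  (forall e, 4 ^ e <= X \/ 4 * X <= 4 ^ e) -> False.
Proof.
move=> aA X4 EN AB eB lo2 lo4 pc.
have [A0 evA _] := antiP aA.
have evA' := even_len evA.
have A16 : 16 <= A.
  by rewrite AB; move: (N_pos X4 EN); case: eB => ->; clear; lia.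
have LA6 := Lg6 A16 evA.
have tAB : 4 + 2 * ~~ odd (B %/ 2) + ~~ odd (B %/ 4) = 4 + 2 * ~~ odd (A %/ 2) + ~~ odd (A %/ 4).
  by rewrite lo2 lo4.
have := top3 aA LA6 tAB.
rewrite (len_split LA6 evA').
rewrite expnD expnM => /andP [h1 h2].
have E : (2 ^ 2) ^ ((Lg A)./2 - 2) = 4 ^ ((Lg A)./2 - 2) by [].
rewrite E in h1 h2.
move: h1 h2 (pc ((Lg A)./2 - 2)); rewrite AB.
move: (4 ^ _) => F.
move=> h1 h2 hF.
apply: (core_small (B := B) (t := 4 + 2 * ~~ odd (B %/ 2) + ~~ odd (B %/ 4)) X4 EN hF _ h1 h2).
by case: eB => ->; [left|right].
Qed.

Lemma large_case A B N X : antipalindromic A -> antipalindromic B -> 4 <= X ->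
  3 * N + 1 = 4 * X -> A = N * B -> 16 <= B ->
  odd (A %/ 2) = odd (B %/ 2) -> odd (A %/ 4) = odd (B %/ 4) ->
  (forall e, 4 ^ e <= X \/ 4 * X <= 4 ^ e) -> False.
Proof.
move=> aA aB X4 EN AB hB lo2 lo4 pc.
have [A0 evA _] := antiP aA.
have [B0 evB _] := antiP aB.
have N1 : 1 <= N by apply: leq_trans (N_pos X4 EN).
have BA : B <= A by rewrite AB leq_pmull.
have tAB : 4 + 2 * ~~ odd (B %/ 2) + ~~ odd (B %/ 4) = 4 + 2 * ~~ odd (A %/ 2) + ~~ odd (A %/ 4).
  by rewrite lo2 lo4.
have [tB etB] : exists tB, tB = 4 + 2 * ~~ odd (B %/ 2) + ~~ odd (B %/ 4) by eexists.
rewrite -etB in tAB.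
have t4 : 4 <= tB by rewrite etB -addnA leq_addr.
have evA' := even_len evA.
have LB6 := Lg6 hB evB.
have LA6 := Lg6 (leq_trans hB BA) evA.
have evB' := even_len evB.
have /andP [ta1 ta2] := top3 aA LA6 tAB.
have /andP [tb1 tb2] := top3 aB LB6 etB.
case: (leqP ((Lg B)./2) ((Lg A)./2)) => hab.
- rewrite (len_split2 hab LA6 LB6 evA' evB') in ta1 ta2.
  rewrite expnD expnM in ta1 ta2.
  have E : (2 ^ 2) ^ ((Lg A)./2 - (Lg B)./2) = 4 ^ ((Lg A)./2 - (Lg B)./2) by [].
  rewrite E in ta1 ta2.
  have P0 : 0 < 2 ^ (Lg B - 3) by rewrite expn_gt0.
  move: ta1 ta2 (pc ((Lg A)./2 - (Lg B)./2)) P0 tb1 tb2.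
  move: (4 ^ _) (2 ^ (Lg B - 3)) => F P ta1 ta2 hF P0 tb1 tb2.
  exact: (core1 t4 X4 EN hF P0 tb1 tb2 ta1 ta2 AB).
- rewrite (len_split2 (ltnW hab) LB6 LA6 evB' evA') in tb1 tb2.
  rewrite expnD expnM in tb1 tb2.
  have E : (2 ^ 2) ^ ((Lg B)./2 - (Lg A)./2) = 4 ^ ((Lg B)./2 - (Lg A)./2) by [].
  rewrite E in tb1 tb2.
  have E4 : 4 <= 4 ^ ((Lg B)./2 - (Lg A)./2).
    by apply: pow4_ge4; rewrite subn_gt0.
  move: tb1 tb2 E4 ta2; move: (4 ^ _) (2 ^ (Lg A - 3)) => F Q tb1 tb2 E4 ta2.
  apply: (core0 (t := tB) (P := Q * F) (Q := Q) (A := A) (B := B)) => //.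
  + exact: leq_trans t4.
  + by rewrite mulnC; apply: leq_mul => //; apply: leq_trans E4.
Qed.

Lemma uniqB k A B : antipalindromic A -> antipalindromic B -> A = nk k.+2 * B -> B = 2.
Proof.
move=> aA aB AB.
have NE : nk k.+2 = 4 * nk k.+1 + 1 by [].
have X4 : 4 <= 4 ^ k.+1 by rewrite expnS; have := expn_gt0 4 k; lia.
have EN : 3 * nk k.+2 + 1 = 4 * 4 ^ k.+1 by rewrite nkE -expnS.
have AB' : A = (4 * nk k.+1 + 1) * B by rewrite AB NE.
have [lo2 lo4] := lowbits (anti_even aB) AB'.
have pc : forall e, 4 ^ e <= 4 ^ k.+1 \/ 4 * 4 ^ k.+1 <= 4 ^ e by move=> e; exact: pow_cmp.
case: (ltnP B 16) => hB.
  case: (small_anti hB aB) => [//|eB|eB]; exfalso.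
    exact: (small_case aA X4 EN AB (or_introl eB) lo2 lo4 pc).
  exact: (small_case aA X4 EN AB (or_intror eB) lo2 lo4 pc).
exfalso; exact: (large_case aA aB X4 EN AB hB lo2 lo4 pc).
Qed.

Lemma nk_ge k : k <= nk k.
Proof. by elim: k => //= k IH; lia. Qed.

Theorem theorem22 :
  forall M : nat, exists N : nat, M < N /\
    exists! AB : nat * nat,
      [/\ antipalindromic AB.1, antipalindromic AB.2 & AB.1 = N * AB.2].
Proof.
move=> M; exists (nk M.+2); split; first by have := nk_ge M.+2; lia.
exists ((nk M.+2).*2, 2); split.
  by split; [exact: anti_a | by [] | rewrite /= muln2].
move=> [A B] /= [aA aB AB].
have eB := uniqB aA aB AB.
by rewrite AB eB muln2.
Qed.
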